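(* Let $a,b,c,d>0$ and, on $\mathbb R^2$, let $G_B(0)=0$ and $G_B(u)=\frac{1}{|u|}\big((au_1^2+bu_2^2)u_1,\ (cu_1^2+du_2^2)u_2\big)$ for $u\ne0$. For $w\in\mathbb R^2$ set $|w|_1=(aw_1^2+bw_2^2)^{1/2}$, $|w|_2=(cw_1^2+dw_2^2)^{1/2}$. (i) If either $$\Big[b+c-\tfrac{(|w|_1+|w|_2)^2}{2}\Big]^2\le 4ad\ \text{ for all } w\in\mathbb R^2,\ |w|=1,$$ or $$\Big[b+c-\tfrac{(|w|_1-|w|_2)^2}{2}\Big]^2\le 4ad\ \text{ for all } w\in\mathbb R^2,\ |w|=1,$$ then $G_B$ is monotone. (ii) If either of these two conditions holds with strict inequality for all unit $w$, then $G_B$ is $3$-monotone.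
   Context: A map $F:\mathbb R^n\to\mathbb R^n$ is monotone if $(F(u)-F(v))\cdot(u-v)\ge0$ for all $u,v$; for $\alpha>0$ it is $\alpha$-monotone if there is $C>0$ with $(F(u)-F(v))\cdot(u-v)\ge C|u-v|^\alpha$ for all $u,v\in\mathbb R^n$. $|\cdot|$ is the Euclidean norm. *)

(* Defs.v *)
From Stdlib Require Import Reals Lra.
Open Scope R_scope.

Definition vec2 := (R * R)%type.

Definition vsub (u v : vec2) : vec2 := (fst u - fst v, snd u - snd v).
Definition dot (u v : vec2) : R := fst u * fst v + snd u * snd v.
Definition norm2 (u : vec2) : R := sqrt (fst u ^ 2 + snd u ^ 2).

Definition powr (x alpha : R) : R :=
  if Req_EM_T x 0 then 0 else Rpower x alpha.

Definition monotone (F : vec2 -> vec2) : Prop :=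
  forall u v : vec2, 0 <= dot (vsub (F u) (F v)) (vsub u v).

Definition alpha_monotone (alpha : R) (F : vec2 -> vec2) : Prop :=
  exists C : R, 0 < C /\
    forall u v : vec2, dot (vsub (F u) (F v)) (vsub u v) >= C * powr (norm2 (vsub u v)) alpha.

Definition GB_formula (a b c d : R) (u : vec2) : vec2 :=
  let u1 := fst u in let u2 := snd u in
  ((a * u1 ^ 2 + b * u2 ^ 2) * u1 / norm2 u,
   (c * u1 ^ 2 + d * u2 ^ 2) * u2 / norm2 u).

Definition GB (a b c d : R) (u : vec2) : vec2 :=
  if Req_EM_T (fst u) 0 then
    (if Req_EM_T (snd u) 0 then (0, 0) else GB_formula a b c d u)
  else GB_formula a b c d u.

Definition wnorm1 (a b : R) (w : vec2) : R := sqrt (a * fst w ^ 2 + b * snd w ^ 2).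
Definition wnorm2 (c d : R) (w : vec2) : R := sqrt (c * fst w ^ 2 + d * snd w ^ 2).

(* Main.v *)
Require Import Defs.
From Stdlib Require Import Reals Lra Psatz Classical.
From Coquelicot Require Import Coquelicot.
Open Scope R_scope.

Definition Pf (a b c d X1 X2 h1 h2 : R) : R :=
  (X1^2+X2^2)*((3*a*X1^2+b*X2^2)*h1^2 + 2*(b+c)*X1*X2*h1*h2 + (c*X1^2+3*d*X2^2)*h2^2)
  - ((a*X1^2+b*X2^2)*X1*h1 + (c*X1^2+d*X2^2)*X2*h2)*(X1*h1+X2*h2).

Lemma Pf_decomp a b c d X1 X2 h1 h2 :
  Pf a b c d X1 X2 h1 h2 =
  (2*a*X1^2*(X1^2+X2^2) + (a*X1^2+b*X2^2)*X2^2)*h1*h1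
  + 2*(X1*X2*((X1^2+X2^2)*(b+c) - ((a*X1^2+b*X2^2)+(c*X1^2+d*X2^2))/2))*h1*h2
  + (2*d*X2^2*(X1^2+X2^2) + (c*X1^2+d*X2^2)*X1^2)*h2*h2.
Proof. unfold Pf. field. Qed.

Lemma Pf_hom a b c d l X1 X2 h1 h2 :
  Pf a b c d (l*X1) (l*X2) h1 h2 = l^4 * Pf a b c d X1 X2 h1 h2.
Proof. unfold Pf. ring. Qed.

Lemma quad_psd A B C x y : 0 <= A -> 0 <= C -> B*B <= A*C ->
  0 <= A*x*x + 2*B*x*y + C*y*y.
Proof.
intros HA HC HB.
destruct (Rle_lt_or_eq_dec 0 A HA) as [HA'|HA'].
- assert (H: A*(A*x*x + 2*B*x*y + C*y*y) = (A*x+B*y)^2 + (A*C-B*B)*y^2) by ring.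
  assert (0 <= A*(A*x*x + 2*B*x*y + C*y*y)).
  { rewrite H. apply Rplus_le_le_0_compat; [apply pow2_ge_0|].
    apply Rmult_le_pos; [lra| apply pow2_ge_0]. }
  nra.
- subst A. assert (B = 0) by nra. subst B. nra.
Qed.

Section Core.
Variables a b c d w1 w2 n1 n2 sa sd m M k0 : R.
Hypotheses (ha : 0 < a) (hb : 0 < b) (hc : 0 < c) (hd : 0 < d)
  (hw : w1^2 + w2^2 = 1) (hn1 : 0 <= n1) (hn2 : 0 <= n2)
  (hn1e : n1^2 = a*w1^2+b*w2^2) (hn2e : n2^2 = c*w1^2+d*w2^2)
  (hsa : 0 < sa) (hsd : 0 < sd) (hsae : a = sa^2) (hsde : d = sd^2)
  (hm : 0 < m) (hma : m <= a) (hmb : m <= b) (hmc : m <= c) (hmd : m <= d)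
  (hMa : a <= M) (hMb : b <= M) (hMc : c <= M) (hMd : d <= M)
  (hk0 : 0 <= k0) (hk0k : k0 <= 2*sa*sd)
  (hup : b+c-(n1^2+n2^2)/2 - n1*n2 <= k0)
  (hlo : -k0 <= b+c-(n1^2+n2^2)/2 + n1*n2).

Lemma core_unit h1 h2 :
  let k := 2*sa*sd in let r := (k0+M)/(k+M) in
  (1 - r^2)*m^2/(6*M) * (h1^2+h2^2) <= Pf a b c d w1 w2 h1 h2.
Proof.
intros k r.
rewrite Pf_decomp. rewrite hw. rewrite <- hn1e, <- hn2e.
set (M11 := 2*a*w1^2*1 + n1^2*w2^2).
set (M22 := 2*d*w2^2*1 + n2^2*w1^2).
set (L := 1*(b+c) - (n1^2+n2^2)/2).
set (M12 := w1*w2*L).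
assert (HM : 0 < M) by lra.
assert (Hw1 : w1^2 <= 1) by nra. assert (Hw2 : w2^2 <= 1) by nra.
assert (Hn1m : m <= n1^2) by nra. assert (Hn2m : m <= n2^2) by nra.
assert (Hn1M : n1^2 <= M) by nra. assert (Hn2M : n2^2 <= M) by nra.
assert (H11a : m <= M11) by (unfold M11; nra).
assert (H22a : m <= M22) by (unfold M22; nra).
assert (H11b : M11 <= 3*M) by (unfold M11; nra).
assert (H22b : M22 <= 3*M) by (unfold M22; nra).
assert (Hk : 0 < k) by (unfold k; nra).
assert (H3 : M11*M22 - w1^2*w2^2*(k+n1*n2)^2 = 2*(sa*w1^2*n2 - sd*w2^2*n1)^2).
{ unfold M11, M22, k. rewrite hsae, hsde. ring. }
assert (Hp : n1*n2 <= M).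
{ assert ((n1*n2)^2 <= M^2).
  { replace ((n1*n2)^2) with (n1^2*n2^2) by ring. replace (M^2) with (M*M) by ring.
    apply Rmult_le_compat; nra. }
  nra. }
assert (Hp0 : 0 <= n1*n2) by nra.
assert (HL : L^2 <= (k0 + n1*n2)^2) by (unfold L; nra).
assert (Hr : k0 + n1*n2 <= r*(k+n1*n2)).
{ assert (E : r*(k+n1*n2) - (k0+n1*n2) = (M-n1*n2)*(k-k0)/(k+M)) by (unfold r; field; lra).
  assert (0 <= (M-n1*n2)*(k-k0)/(k+M)).
  { apply Rmult_le_pos; [apply Rmult_le_pos; unfold k in *; lra| left; apply Rinv_0_lt_compat; lra]. }
  lra. }
assert (Hr0 : 0 <= r) by (unfold r; apply Rmult_le_pos; [lra| left; apply Rinv_0_lt_compat; lra]).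
assert (Hr1 : r <= 1).
{ assert (E : 1 - r = (k-k0)/(k+M)) by (unfold r; field; lra).
  assert (0 <= (k-k0)/(k+M)) by (apply Rmult_le_pos; [unfold k in *; lra| left; apply Rinv_0_lt_compat; lra]).
  lra. }
assert (H6 : M12*M12 <= r^2 * (M11*M22)).
{ assert (L^2 <= r^2*(k+n1*n2)^2).
  { assert ((k0+n1*n2)^2 <= (r*(k+n1*n2))^2) by (apply pow_incr; lra). nra. }
  unfold M12. assert (0 <= w1^2*w2^2) by nra.
  assert (w1^2*w2^2*L^2 <= w1^2*w2^2*(r^2*(k+n1*n2)^2)) by (apply Rmult_le_compat_l; auto).
  assert (0 <= 2*(sa*w1^2*n2 - sd*w2^2*n1)^2) by (apply Rmult_le_pos; [lra| apply pow2_ge_0]).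
  assert (0 <= r^2) by apply pow2_ge_0.
  replace (w1*w2*L*(w1*w2*L)) with (w1^2*w2^2*L^2) by ring.
  apply Rle_trans with (r^2*(w1^2*w2^2*(k+n1*n2)^2)); [lra|].
  apply Rmult_le_compat_l; lra. }
set (th := 1 - r^2). set (kap := th*m^2/(6*M)).
assert (Hth0 : 0 <= th) by (unfold th; nra).
assert (Hth1 : th <= 1) by (unfold th; nra).
assert (Hkap0 : 0 <= kap) by (unfold kap; apply Rmult_le_pos; [nra| left; apply Rinv_0_lt_compat; lra]).
assert (Hkap : kap <= m/6).
{ assert (E : m/6 - kap = m*(M - th*m)/(6*M)) by (unfold kap; field; lra).
  assert (0 <= m*(M - th*m)/(6*M)).
  { apply Rmult_le_pos; [apply Rmult_le_pos; nra| left; apply Rinv_0_lt_compat; lra]. }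
  lra. }
assert (HQ : 0 <= (M11-kap)*h1*h1 + 2*M12*h1*h2 + (M22-kap)*h2*h2).
{ apply quad_psd; try lra.
  assert (M11*M22 >= m*m) by nra.
  assert (kap*(6*M) = th*m^2) by (unfold kap; field; lra).
  assert (th*(M11*M22) >= th*(m*m)) by nra.
  unfold th in *. nra. }
fold th. fold kap. nra.
Qed.
End Core.

Definition mn (a b c d : R) := Rmin (Rmin a b) (Rmin c d).
Definition mx (a b c d : R) := Rmax (Rmax a b) (Rmax c d).
Definition kap (a b c d k0 : R) :=
  let k := 2*sqrt a*sqrt d in let r := (k0+mx a b c d)/(k+mx a b c d) in
  (1 - r^2)*(mn a b c d)^2/(6*mx a b c d).

Definition Dcond (a b c d K : R) :=
  (forall w : vec2, norm2 w = 1 ->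
        (b + c - (wnorm1 a b w + wnorm2 c d w) ^ 2 / 2) ^ 2 <= K)
  \/ (forall w : vec2, norm2 w = 1 ->
        (b + c - (wnorm1 a b w - wnorm2 c d w) ^ 2 / 2) ^ 2 <= K).

Lemma main_Pf a b c d k0 : 0 < a -> 0 < b -> 0 < c -> 0 < d ->
  0 <= k0 -> k0 <= 2*sqrt a*sqrt d -> Dcond a b c d (k0^2) ->
  forall X1 X2 h1 h2, kap a b c d k0 * (X1^2+X2^2)^2 * (h1^2+h2^2) <= Pf a b c d X1 X2 h1 h2.
Proof.
intros ha hb hc hd hk0 hk0k HD X1 X2 h1 h2.
destruct (Req_dec (X1^2+X2^2) 0) as [HS|HS].
{ assert (X1 = 0) by nra. assert (X2 = 0) by nra. subst. rewrite HS. unfold Pf. ring_simplify. lra. }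
assert (HSp : 0 < X1^2+X2^2) by (assert (0 <= X1^2+X2^2) by nra; lra).
set (S := X1^2+X2^2) in *.
set (N := sqrt S).
assert (HNp : 0 < N) by (apply sqrt_lt_R0; lra).
assert (HNN : N*N = S) by (apply sqrt_sqrt; lra).
set (l := / N).
set (w := (l*X1, l*X2)).
assert (Hl2 : l^2 * S = 1) by (unfold l; rewrite <- HNN; field; lra).
assert (Hw : fst w ^2 + snd w ^2 = 1) by (simpl; unfold S in Hl2; nra).
assert (Hwn : norm2 w = 1) by (unfold norm2; rewrite Hw; apply sqrt_1).
set (n1 := wnorm1 a b w). set (n2 := wnorm2 c d w).
assert (Hn1 : 0 <= n1) by apply sqrt_pos.
assert (Hn2 : 0 <= n2) by apply sqrt_pos.
assert (Hn1e : n1^2 = a*fst w^2+b*snd w^2).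
{ unfold n1, wnorm1. apply pow2_sqrt. assert (0 <= fst w^2) by apply pow2_ge_0.
  assert (0 <= snd w^2) by apply pow2_ge_0. nra. }
assert (Hn2e : n2^2 = c*fst w^2+d*snd w^2).
{ unfold n2, wnorm2. apply pow2_sqrt. assert (0 <= fst w^2) by apply pow2_ge_0.
  assert (0 <= snd w^2) by apply pow2_ge_0. nra. }
assert (Hb : b+c-(n1^2+n2^2)/2 - n1*n2 <= k0 /\ -k0 <= b+c-(n1^2+n2^2)/2 + n1*n2).
{ assert (0 <= n1*n2) by nra.
  destruct HD as [HD|HD]; specialize (HD w Hwn); fold n1 n2 in HD.
  - set (Y := b + c - (n1 + n2) ^ 2 / 2) in *.
    assert (-k0 <= Y <= k0) by nra. unfold Y in *. split; nra.
  - set (Y := b + c - (n1 - n2) ^ 2 / 2) in *.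
    assert (-k0 <= Y <= k0) by nra. unfold Y in *. split; nra. }
destruct Hb as [Hup Hlo].
assert (Hsa : 0 < sqrt a) by (apply sqrt_lt_R0; lra).
assert (Hsd : 0 < sqrt d) by (apply sqrt_lt_R0; lra).
assert (Hm : 0 < mn a b c d).
{ unfold mn. repeat (apply Rmin_case); lra. }
assert (HC := core_unit a b c d (fst w) (snd w) n1 n2 (sqrt a) (sqrt d) (mn a b c d) (mx a b c d) k0
  ha hb Hw Hn1 Hn2 Hn1e Hn2e Hsa Hsd (eq_sym (pow2_sqrt a (Rlt_le _ _ ha)))
  (eq_sym (pow2_sqrt d (Rlt_le _ _ hd))) Hm
  (Rle_trans _ _ _ (Rmin_l _ _) (Rmin_l _ _)) (Rle_trans _ _ _ (Rmin_l _ _) (Rmin_r _ _))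
  (Rle_trans _ _ _ (Rmin_r _ _) (Rmin_l _ _)) (Rle_trans _ _ _ (Rmin_r _ _) (Rmin_r _ _))
  (Rle_trans _ _ _ (Rmax_l _ _) (Rmax_l _ _)) (Rle_trans _ _ _ (Rmax_r _ _) (Rmax_l _ _))
  (Rle_trans _ _ _ (Rmax_l _ _) (Rmax_r _ _)) (Rle_trans _ _ _ (Rmax_r _ _) (Rmax_r _ _))
  hk0 hk0k Hup Hlo h1 h2).
simpl in HC. unfold w in HC. simpl in HC. rewrite Pf_hom in HC.
fold (kap a b c d k0) in HC.
assert (E : Pf a b c d X1 X2 h1 h2 = S^2 * (l^4 * Pf a b c d X1 X2 h1 h2)).
{ replace (S^2*(l^4*Pf a b c d X1 X2 h1 h2)) with ((l^2*S)^2*Pf a b c d X1 X2 h1 h2) by ring.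
  rewrite Hl2. ring. }
rewrite E. fold S.
assert (0 <= S^2) by apply pow2_ge_0.
replace (kap a b c d k0 * S ^ 2 * (h1 ^ 2 + h2 ^ 2)) with (S^2 * (kap a b c d k0 * (h1 ^ 2 + h2 ^ 2))) by ring.
apply Rmult_le_compat_l; auto.
Qed.

Lemma GB_eq a b c d u : GB a b c d u = GB_formula a b c d u.
Proof.
destruct u as [u1 u2]. unfold GB. simpl.
destruct (Req_EM_T u1 0); destruct (Req_EM_T u2 0); auto.
subst. unfold GB_formula. simpl. f_equal; unfold Rdiv; ring.
Qed.

Lemma sqrt_scale l S : 0 <= S -> sqrt (l^2*S) = Rabs l * sqrt S.
Proof.
intros HS. rewrite sqrt_mult; [|apply pow2_ge_0|auto].
rewrite <- sqrt_Rsqr_abs. unfold Rsqr. replace (l^2) with (l*l) by ring. reflexivity.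
Qed.

Lemma GBf_scale a b c d l h1 h2 :
  GB_formula a b c d (l*h1, l*h2) =
  (l*Rabs l * fst (GB_formula a b c d (h1,h2)), l*Rabs l * snd (GB_formula a b c d (h1,h2))).
Proof.
unfold GB_formula, norm2. cbn [fst snd].
replace ((l*h1)^2+(l*h2)^2) with (l^2*(h1^2+h2^2)) by ring.
rewrite sqrt_scale by nra.
destruct (Req_dec l 0) as [->|Hl]. { f_equal; unfold Rdiv; ring. }
destruct (Req_dec (sqrt (h1^2+h2^2)) 0) as [H0|H0].
{ rewrite H0. f_equal; unfold Rdiv; rewrite Rmult_0_r, Rinv_0; ring. }
destruct (Rcase_abs l) as [Hn|Hp].
- rewrite (Rabs_left l Hn). f_equal; field; split; auto; lra.
- rewrite (Rabs_right l Hp). f_equal; field; split; auto.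
Qed.

Lemma Gh_nonneg a b c d h1 h2 : 0 <= a -> 0 <= d -> 0 <= b + c ->
  0 <= fst (GB_formula a b c d (h1,h2)) * h1 + snd (GB_formula a b c d (h1,h2)) * h2.
Proof.
intros ha hd hbc. unfold GB_formula. cbn [fst snd].
set (N := norm2 (h1,h2)).
replace ((a * h1 ^ 2 + b * h2 ^ 2) * h1 / N * h1 + (c * h1 ^ 2 + d * h2 ^ 2) * h2 / N * h2)
  with ((a*(h1^2)^2 + (b+c)*(h1^2*h2^2) + d*(h2^2)^2) * / N) by (unfold Rdiv; ring).
apply Rmult_le_pos.
- assert (0 <= h1^2) by apply pow2_ge_0. assert (0 <= h2^2) by apply pow2_ge_0.
  assert (0 <= (h1^2)^2) by apply pow2_ge_0. assert (0 <= (h2^2)^2) by apply pow2_ge_0.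
  assert (0 <= h1^2*h2^2) by (apply Rmult_le_pos; auto).
  assert (0 <= a*(h1^2)^2) by (apply Rmult_le_pos; auto).
  assert (0 <= (b+c)*(h1^2*h2^2)) by (apply Rmult_le_pos; auto).
  assert (0 <= d*(h2^2)^2) by (apply Rmult_le_pos; auto). lra.
- assert (0 <= N) by apply sqrt_pos.
  destruct (Req_dec N 0) as [->|HN]; [rewrite Rinv_0; lra|].
  left; apply Rinv_0_lt_compat; lra.
Qed.

Lemma origin_case a b c d h1 h2 t : 0 <= a -> 0 <= d -> 0 <= b + c -> 0 <= t <= 1 ->
  0 <= dot (vsub (GB_formula a b c d ((1-t)*h1,(1-t)*h2)) (GB_formula a b c d ((-t)*h1,(-t)*h2)))
           (vsub ((1-t)*h1,(1-t)*h2) ((-t)*h1,(-t)*h2)).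
Proof.
intros ha hd hbc ht.
rewrite !GBf_scale. rewrite (Rabs_right (1-t)) by lra.
rewrite (Rabs_left1 (-t)) by lra.
unfold dot, vsub. cbn [fst snd].
set (g1 := fst (GB_formula a b c d (h1, h2))). set (g2 := snd (GB_formula a b c d (h1, h2))).
assert (H := Gh_nonneg a b c d h1 h2 ha hd hbc). fold g1 g2 in H.
replace ((1 - t) * (1 - t) * g1 - - t * - - t * g1) with (((1-t)^2+t^2)*g1) by ring.
replace ((1 - t) * (1 - t) * g2 - - t * - - t * g2) with (((1-t)^2+t^2)*g2) by ring.
replace ((1 - t) * h1 - - t * h1) with h1 by ring.
replace ((1 - t) * h2 - - t * h2) with h2 by ring.
replace (((1-t)^2+t^2)*g1*h1 + ((1-t)^2+t^2)*g2*h2) with (((1-t)^2+t^2)*(g1*h1+g2*h2)) by ring.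
apply Rmult_le_pos; nra.
Qed.

Definition phi (a b c d v1 v2 h1 h2 t : R) : R :=
  (a*(v1+t*h1)^2+b*(v2+t*h2)^2)*(v1+t*h1)/sqrt((v1+t*h1)^2+(v2+t*h2)^2)*h1
   + (c*(v1+t*h1)^2+d*(v2+t*h2)^2)*(v2+t*h2)/sqrt((v1+t*h1)^2+(v2+t*h2)^2)*h2.

Definition dphi (a b c d v1 v2 h1 h2 t : R) : R :=
  Pf a b c d (v1+t*h1) (v2+t*h2) h1 h2 / (sqrt ((v1+t*h1)^2+(v2+t*h2)^2) ^ 3).

Lemma phi_derive a b c d v1 v2 h1 h2 t : 0 < (v1+t*h1)^2+(v2+t*h2)^2 ->
  is_derive (phi a b c d v1 v2 h1 h2) t (dphi a b c d v1 v2 h1 h2 t).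
Proof.
intros H. unfold phi, dphi, Pf.
set (X1 := v1+t*h1) in *. set (X2 := v2+t*h2) in *.
assert (HS: X1*(X1*1)+X2*(X2*1) = X1^2+X2^2) by ring.
assert (HNp : 0 < sqrt (X1^2+X2^2)) by (apply sqrt_lt_R0; lra).
assert (HN : sqrt (X1^2+X2^2) * sqrt (X1^2+X2^2) = X1^2+X2^2) by (apply sqrt_sqrt; lra).
auto_derive; fold X1 X2; rewrite ?HS.
- repeat split; lra.
- set (N := sqrt (X1^2+X2^2)) in *. rewrite <- HN. field. lra.
Qed.

Lemma monoK a b c d : 0 <= a -> 0 <= d -> 0 <= b + c ->
  (forall X1 X2 h1 h2, 0 <= Pf a b c d X1 X2 h1 h2) -> monotone (GB a b c d).
Proof.
intros ha hd hbc HP [u1 u2] [v1 v2]. rewrite !GB_eq.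
set (h1 := u1 - v1). set (h2 := u2 - v2).
assert (Hu1 : u1 = v1 + h1) by (unfold h1; ring).
assert (Hu2 : u2 = v2 + h2) by (unfold h2; ring).
clearbody h1 h2.
destruct (classic (exists t, 0<=t<=1 /\ v1 + t*h1 = 0 /\ v2 + t*h2 = 0)) as [[t [Ht [E1 E2]]] | Hno].
- assert (Eu : (u1,u2) = ((1-t)*h1,(1-t)*h2)) by (f_equal; lra).
  assert (Ev : (v1,v2) = ((-t)*h1,(-t)*h2)) by (f_equal; lra).
  rewrite Eu, Ev. apply origin_case; auto.
- assert (Hpos : forall t, 0 <= t <= 1 -> 0 < (v1+t*h1)^2+(v2+t*h2)^2).
  { intros t Ht. destruct (Rlt_or_le 0 ((v1+t*h1)^2+(v2+t*h2)^2)) as [|Hle]; auto.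
    exfalso. apply Hno. exists t. split; auto.
    assert (0 <= (v1+t*h1)^2) by apply pow2_ge_0. assert (0 <= (v2+t*h2)^2) by apply pow2_ge_0.
    split; apply Rle_antisym; nra. }
  assert (H := MVT_gen (phi a b c d v1 v2 h1 h2) 0 1 (dphi a b c d v1 v2 h1 h2)).
  cbv zeta in H. rewrite Rmin_left, Rmax_right in H by lra.
  destruct H as [x [Hx Hf]].
  + intros x Hx. apply phi_derive. apply Hpos. lra.
  + intros x Hx. apply derivable_continuous_pt. exists (dphi a b c d v1 v2 h1 h2 x).
    apply is_derive_Reals. apply phi_derive. apply Hpos. lra.
  + assert (Hd : 0 <= dphi a b c d v1 v2 h1 h2 x).
    { unfold dphi. apply Rmult_le_pos; [apply HP|].
      left. apply Rinv_0_lt_compat. apply pow_lt. apply sqrt_lt_R0. apply Hpos. lra. }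
    replace (dot (vsub (GB_formula a b c d (u1, u2)) (GB_formula a b c d (v1, v2))) (vsub (u1, u2) (v1, v2)))
      with (phi a b c d v1 v2 h1 h2 1 - phi a b c d v1 v2 h1 h2 0).
    * rewrite Hf. nra.
    * unfold phi, dot, vsub, GB_formula, norm2. cbn [fst snd]. rewrite Hu1, Hu2.
      replace (v1 + 1*h1) with (v1+h1) by ring. replace (v2 + 1*h2) with (v2+h2) by ring.
      replace (v1 + 0*h1) with v1 by ring. replace (v2 + 0*h2) with v2 by ring.
      replace (v1 + h1 - v1) with h1 by ring. replace (v2 + h2 - v2) with h2 by ring.
      ring.
Qed.

Lemma compact_max (f : R -> R) K :
  (forall s, 0<=s<=1 -> continuity_pt f s) ->
  (forall s, 0<=s<=1 -> 0 <= f s /\ f s < K) ->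
  exists k0, 0 <= k0 /\ k0^2 < K /\ forall s, 0<=s<=1 -> f s <= k0^2.
Proof.
intros Hc Hb.
destruct (continuity_ab_maj f 0 1 ltac:(lra) Hc) as [x [Hx Hxr]].
exists (sqrt (f x)). destruct (Hb x Hxr) as [H0 H1].
rewrite pow2_sqrt by lra. split; [apply sqrt_pos|]. split; auto.
Qed.

Definition fs (a b c d sg s : R) :=
  (b + c - (sqrt (a*s+b*(1-s)) + sg * sqrt (c*s+d*(1-s)))^2/2)^2.

Lemma fs_cont a b c d sg s : 0 < a -> 0 < b -> 0 < c -> 0 < d -> 0 <= s <= 1 ->
  continuity_pt (fs a b c d sg) s.
Proof.
intros ha hb hc hd Hs. apply derivable_continuous_pt. apply ex_derive_Reals_0.
unfold fs. auto_derive. repeat split; nra.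
Qed.

Lemma unit_w (w : vec2) : norm2 w = 1 -> 0 <= fst w ^2 <= 1 /\ snd w ^ 2 = 1 - fst w ^2.
Proof.
intros H. unfold norm2 in H.
assert (0 <= fst w^2) by apply pow2_ge_0. assert (0 <= snd w^2) by apply pow2_ge_0.
assert (E : fst w ^2 + snd w^2 = 1).
{ rewrite <- (pow2_sqrt (fst w ^2 + snd w^2)) by lra. rewrite H. ring. }
lra.
Qed.

Lemma wn_s a b c d sg w : norm2 w = 1 ->
  (b + c - (wnorm1 a b w + sg * wnorm2 c d w) ^ 2 / 2) ^ 2 = fs a b c d sg (fst w ^ 2).
Proof.
intros H. destruct (unit_w w H) as [_ E]. unfold fs, wnorm1, wnorm2. rewrite E. reflexivity.
Qed.

Lemma s_unit s : 0 <= s <= 1 -> norm2 (sqrt s, sqrt (1-s)) = 1 /\ fst (sqrt s, sqrt (1-s)) ^ 2 = s.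
Proof.
intros Hs. unfold norm2. cbn [fst snd]. rewrite !pow2_sqrt by lra.
split; auto. replace (s + (1-s)) with 1 by ring. apply sqrt_1.
Qed.

Lemma strict_to_k0 a b c d sg : 0 < a -> 0 < b -> 0 < c -> 0 < d ->
  (forall w : vec2, norm2 w = 1 ->
        (b + c - (wnorm1 a b w + sg * wnorm2 c d w) ^ 2 / 2) ^ 2 < 4*a*d) ->
  exists k0, 0 <= k0 /\ k0 < 2*sqrt a*sqrt d /\
   forall w : vec2, norm2 w = 1 ->
        (b + c - (wnorm1 a b w + sg * wnorm2 c d w) ^ 2 / 2) ^ 2 <= k0^2.
Proof.
intros ha hb hc hd H.
destruct (compact_max (fs a b c d sg) (4*a*d)) as [k0 [Hk0 [Hk1 Hk2]]].
- intros s Hs. apply fs_cont; auto.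
- intros s Hs. destruct (s_unit s Hs) as [Hn Hf]. specialize (H _ Hn).
  rewrite wn_s in H by auto. rewrite Hf in H. split; auto. unfold fs. apply pow2_ge_0.
- exists k0. split; auto. split.
  + assert (Ha := pow2_sqrt a (Rlt_le _ _ ha)). assert (Hd := pow2_sqrt d (Rlt_le _ _ hd)).
    assert (0 < sqrt a) by (apply sqrt_lt_R0; lra). assert (0 < sqrt d) by (apply sqrt_lt_R0; lra).
    assert (E : (2*sqrt a*sqrt d)^2 = 4*a*d) by (replace ((2*sqrt a*sqrt d)^2) with (4*(sqrt a^2)*(sqrt d^2)) by ring; rewrite Ha, Hd; ring).
    assert (0 < 2*sqrt a*sqrt d) by nra.
    destruct (Rlt_or_le k0 (2*sqrt a*sqrt d)); auto. nra.
  + intros w Hw. rewrite wn_s by auto. apply Hk2. apply unit_w; auto.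
Qed.

Lemma comp_id A B del x y N : N*N = x^2+y^2 ->
  (A*x^2+B*y^2)*x/N = ((A-del)*x^2+(B-del)*y^2)*x/N + del*(N*x).
Proof.
intros HN.
assert (E : (A*x^2+B*y^2)*x/N = ((A-del)*x^2+(B-del)*y^2)*x/N + del*((x^2+y^2)*x/N))
  by (unfold Rdiv; ring).
rewrite E, <- HN. destruct (Req_dec N 0) as [->|H0].
- unfold Rdiv. rewrite Rinv_0. ring.
- field. auto.
Qed.

Lemma dot_split a b c d del u v :
  dot (vsub (GB_formula a b c d u) (GB_formula a b c d v)) (vsub u v) =
  dot (vsub (GB_formula (a-del) (b-del) (c-del) (d-del) u) (GB_formula (a-del) (b-del) (c-del) (d-del) v)) (vsub u v)
  + del * ((norm2 u * fst u - norm2 v * fst v) * (fst u - fst v) + (norm2 u * snd u - norm2 v * snd v) * (snd u - snd v)).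
Proof.
destruct u as [u1 u2], v as [v1 v2]. unfold dot, vsub, GB_formula. cbn [fst snd].
assert (Hu : norm2 (u1,u2) * norm2 (u1,u2) = u1^2+u2^2) by (apply sqrt_sqrt; cbn; nra).
assert (Hv : norm2 (v1,v2) * norm2 (v1,v2) = v1^2+v2^2) by (apply sqrt_sqrt; cbn; nra).
assert (Hu' : norm2 (u1,u2) * norm2 (u1,u2) = u2^2+u1^2) by lra.
assert (Hv' : norm2 (v1,v2) * norm2 (v1,v2) = v2^2+v1^2) by lra.
rewrite (comp_id a b del u1 u2 _ Hu), (comp_id a b del v1 v2 _ Hv).
replace ((c * u1 ^ 2 + d * u2 ^ 2) * u2) with ((d * u2 ^ 2 + c * u1 ^ 2) * u2) by ring.
replace ((c * v1 ^ 2 + d * v2 ^ 2) * v2) with ((d * v2 ^ 2 + c * v1 ^ 2) * v2) by ring.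
rewrite (comp_id d c del u2 u1 _ Hu'), (comp_id d c del v2 v1 _ Hv').
unfold Rdiv. ring.
Qed.

Lemma cubic_bound u1 u2 v1 v2 :
  norm2 (u1-v1, u2-v2) ^ 3 / 2 <=
  (norm2 (u1,u2) * u1 - norm2 (v1,v2) * v1) * (u1 - v1) + (norm2 (u1,u2) * u2 - norm2 (v1,v2) * v2) * (u2 - v2).
Proof.
set (p := norm2 (u1,u2)). set (q := norm2 (v1,v2)). set (D := norm2 (u1-v1,u2-v2)).
assert (Hp : p*p = u1^2+u2^2) by (unfold p, norm2; cbn [fst snd]; apply sqrt_sqrt; apply Rplus_le_le_0_compat; apply pow2_ge_0).
assert (Hq : q*q = v1^2+v2^2) by (unfold q, norm2; cbn [fst snd]; apply sqrt_sqrt; apply Rplus_le_le_0_compat; apply pow2_ge_0).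
assert (HD : D*D = (u1-v1)^2+(u2-v2)^2) by (unfold D, norm2; cbn [fst snd]; apply sqrt_sqrt; apply Rplus_le_le_0_compat; apply pow2_ge_0).
assert (p0 : 0 <= p) by apply sqrt_pos. assert (q0 : 0 <= q) by apply sqrt_pos.
assert (D0 : 0 <= D) by apply sqrt_pos.
set (uv := u1*v1+u2*v2).
assert (E : (p * u1 - q * v1) * (u1 - v1) + (p * u2 - q * v2) * (u2 - v2) = p*(p*p) + q*(q*q) - (p+q)*uv)
  by (rewrite Hp, Hq; unfold uv; ring).
rewrite E.
assert (HD2 : D*D = p*p + q*q - 2*uv) by (rewrite HD, Hp, Hq; unfold uv; ring).
assert (Huv : uv*uv <= (p*q)*(p*q)).
{ replace ((p*q)*(p*q)) with ((p*p)*(q*q)) by ring. rewrite Hp, Hq. unfold uv.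
  assert (0 <= (u1*v2-u2*v1)^2) by apply pow2_ge_0. nra. }
clearbody p q D uv.
assert (Huv2 : - (p*q) <= uv).
{ assert (0 <= p*q) by (apply Rmult_le_pos; auto).
  destruct (Rle_or_lt (-(p*q)) uv); auto. nra. }
assert (HDpq : D <= p + q) by (destruct (Rle_or_lt D (p+q)); auto; nra).
assert (E2 : p*(p*p) + q*(q*q) - (p+q)*uv - (p+q)*(D*D)/2 = (p+q)*(p-q)^2/2) by (rewrite HD2; field).
assert (0 <= (p+q)*(p-q)^2/2) by (assert (0 <= (p-q)^2) by apply pow2_ge_0; nra).
assert (D*(D*D) <= (p+q)*(D*D)) by (apply Rmult_le_compat_r; nra).
replace (D^3/2) with (D*(D*D)/2) by field. lra.
Qed.

Lemma Pf_lin a b c d del X1 X2 h1 h2 :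
  Pf (a-del) (b-del) (c-del) (d-del) X1 X2 h1 h2 =
  Pf a b c d X1 X2 h1 h2 - del*((X1^2+X2^2)^2*(h1^2+h2^2) + (X1^2+X2^2)*(X1*h1+X2*h2)^2).
Proof. unfold Pf. ring. Qed.

Lemma mn_pos a b c d : 0 < a -> 0 < b -> 0 < c -> 0 < d -> 0 < mn a b c d.
Proof. intros. unfold mn. repeat apply Rmin_case; lra. Qed.

Lemma mx_pos a b c d : 0 < a -> 0 < mx a b c d.
Proof. intros. unfold mx. eapply Rlt_le_trans; [eauto|]. eapply Rle_trans; apply Rmax_l. Qed.

Lemma strict_finish a b c d k0 : 0 < a -> 0 < b -> 0 < c -> 0 < d ->
  0 <= k0 -> k0 < 2*sqrt a*sqrt d -> Dcond a b c d (k0^2) -> alpha_monotone 3 (GB a b c d).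
Proof.
intros ha hb hc hd hk0 hk0k HD.
assert (HP := main_Pf a b c d k0 ha hb hc hd hk0 (Rlt_le _ _ hk0k) HD).
assert (Hm := mn_pos a b c d ha hb hc hd). assert (HM := mx_pos a b c d ha).
assert (Hkap : 0 < kap a b c d k0).
{ unfold kap. set (k := 2*sqrt a*sqrt d) in *. set (M := mx a b c d) in *. set (m := mn a b c d) in *.
  set (r := (k0+M)/(k+M)).
  assert (E : 1 - r = (k-k0)/(k+M)) by (unfold r; field; lra).
  assert (0 < (k-k0)/(k+M)) by (apply Rdiv_lt_0_compat; lra).
  assert (0 <= r) by (unfold r; apply Rmult_le_pos; [lra| left; apply Rinv_0_lt_compat; lra]).
  assert (0 < 1 - r^2) by nra.
  apply Rdiv_lt_0_compat; [|lra]. apply Rmult_lt_0_compat; auto. apply pow_lt; auto. }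
set (kp := kap a b c d k0) in *.
set (m := mn a b c d) in *.
set (del := Rmin (kp/2) (m/2)).
assert (Hdel0 : 0 < del) by (unfold del; apply Rmin_case; lra).
assert (Hdel1 : del <= kp/2) by apply Rmin_l.
assert (Hdel2 : del <= m/2) by apply Rmin_r.
assert (Hma : m <= a) by (unfold m, mn; eapply Rle_trans; apply Rmin_l).
assert (Hmb : m <= b) by (unfold m, mn; eapply Rle_trans; [apply Rmin_l|apply Rmin_r]).
assert (Hmc : m <= c) by (unfold m, mn; eapply Rle_trans; [apply Rmin_r|apply Rmin_l]).
assert (Hmd : m <= d) by (unfold m, mn; eapply Rle_trans; apply Rmin_r).
assert (HP' : forall X1 X2 h1 h2, 0 <= Pf (a-del) (b-del) (c-del) (d-del) X1 X2 h1 h2).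
{ intros X1 X2 h1 h2. rewrite Pf_lin. specialize (HP X1 X2 h1 h2).
  set (T := (X1^2+X2^2)^2*(h1^2+h2^2)).
  replace (kp * (X1 ^ 2 + X2 ^ 2) ^ 2 * (h1 ^ 2 + h2 ^ 2)) with (kp*T) in HP by (unfold T; ring).
  assert (HT : 0 <= T) by (unfold T; apply Rmult_le_pos; [apply pow2_ge_0|
     apply Rplus_le_le_0_compat; apply pow2_ge_0]).
  assert (HC : (X1^2+X2^2)*(X1*h1+X2*h2)^2 <= T).
  { unfold T. assert (E : (X1^2+X2^2)^2*(h1^2+h2^2) - (X1^2+X2^2)*(X1*h1+X2*h2)^2
       = (X1^2+X2^2)*(X1*h2-X2*h1)^2) by ring.
    assert (0 <= (X1^2+X2^2)*(X1*h2-X2*h1)^2).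
    { apply Rmult_le_pos; [apply Rplus_le_le_0_compat|]; apply pow2_ge_0. }
    lra. }
  assert (del * ((X1^2+X2^2)*(X1*h1+X2*h2)^2) <= del*T) by (apply Rmult_le_compat_l; lra).
  assert (0 <= (kp - 2*del)*T) by (apply Rmult_le_pos; lra).
  nra. }
assert (Hmono := monoK (a-del) (b-del) (c-del) (d-del) ltac:(lra) ltac:(lra) ltac:(lra) HP').
exists (del/2). split; [lra|].
intros [u1 u2] [v1 v2].
specialize (Hmono (u1,u2) (v1,v2)). rewrite !GB_eq in Hmono. rewrite !GB_eq.
rewrite (dot_split a b c d del).
assert (HB := cubic_bound u1 u2 v1 v2).
cbn [vsub fst snd] in *.
set (Dn := norm2 (u1-v1,u2-v2)) in *.
assert (HD0 : 0 <= Dn) by apply sqrt_pos.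
set (Eu := (norm2 (u1, u2) * u1 - norm2 (v1, v2) * v1) * (u1 - v1) +
       (norm2 (u1, u2) * u2 - norm2 (v1, v2) * v2) * (u2 - v2)) in *.
assert (H3 : del * (Dn^3/2) <= del*Eu) by (apply Rmult_le_compat_l; lra).
assert (0 <= Dn^3) by (apply pow_le; auto).
replace (norm2 (vsub (u1,u2) (v1,v2))) with Dn by reflexivity.
unfold powr. destruct (Req_EM_T Dn 0) as [H0|H0].
- assert (0 <= del*(Dn^3/2)) by (apply Rmult_le_pos; lra). lra.
- assert (HR : Rpower Dn 3 = Dn^3).
  { replace 3 with (INR 3) by (simpl; ring). apply Rpower_pow. lra. }
  rewrite HR. lra.
Qed.

Theorem mainTheorem4 (a b c d : R) (ha : 0 < a) (hb : 0 < b) (hc : 0 < c) (hd : 0 < d) :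
  ( ((forall w : vec2, norm2 w = 1 ->
        (b + c - (wnorm1 a b w + wnorm2 c d w) ^ 2 / 2) ^ 2 <= 4 * a * d)
     \/ (forall w : vec2, norm2 w = 1 ->
        (b + c - (wnorm1 a b w - wnorm2 c d w) ^ 2 / 2) ^ 2 <= 4 * a * d))
    -> monotone (GB a b c d) )
  /\
  ( ((forall w : vec2, norm2 w = 1 ->
        (b + c - (wnorm1 a b w + wnorm2 c d w) ^ 2 / 2) ^ 2 < 4 * a * d)
     \/ (forall w : vec2, norm2 w = 1 ->
        (b + c - (wnorm1 a b w - wnorm2 c d w) ^ 2 / 2) ^ 2 < 4 * a * d))
    -> alpha_monotone 3 (GB a b c d) ).
Proof.
assert (Ha := pow2_sqrt a (Rlt_le _ _ ha)). assert (Hd := pow2_sqrt d (Rlt_le _ _ hd)).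
assert (Hsa : 0 < sqrt a) by (apply sqrt_lt_R0; lra). assert (Hsd : 0 < sqrt d) by (apply sqrt_lt_R0; lra).
assert (Ek : (2*sqrt a*sqrt d)^2 = 4*a*d)
  by (replace ((2*sqrt a*sqrt d)^2) with (4*(sqrt a^2)*(sqrt d^2)) by ring; rewrite Ha, Hd; ring).
split.
- intros HD.
  assert (HD' : Dcond a b c d ((2*sqrt a*sqrt d)^2)) by (unfold Dcond; rewrite Ek; exact HD).
  assert (HP := main_Pf a b c d (2*sqrt a*sqrt d) ha hb hc hd ltac:(nra) (Rle_refl _) HD').
  assert (HM := mx_pos a b c d ha).
  assert (Hk0 : kap a b c d (2*sqrt a*sqrt d) = 0).
  { unfold kap. replace ((2 * sqrt a * sqrt d + mx a b c d) / (2 * sqrt a * sqrt d + mx a b c d)) with 1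
      by (field; nra). field. lra. }
  rewrite Hk0 in HP.
  apply monoK; try lra. intros X1 X2 h1 h2. specialize (HP X1 X2 h1 h2). lra.
- intros HS. destruct HS as [HS|HS].
  + destruct (strict_to_k0 a b c d 1 ha hb hc hd) as [k0 [Hk0 [Hk1 Hk2]]].
    { intros w Hw. rewrite Rmult_1_l. apply HS; auto. }
    apply (strict_finish a b c d k0); auto.
    left. intros w Hw. specialize (Hk2 w Hw). rewrite Rmult_1_l in Hk2. exact Hk2.
  + destruct (strict_to_k0 a b c d (-1) ha hb hc hd) as [k0 [Hk0 [Hk1 Hk2]]].
    { intros w Hw. replace (wnorm1 a b w + -1 * wnorm2 c d w) with (wnorm1 a b w - wnorm2 c d w) by ring.
      apply HS; auto. }
    apply (strict_finish a b c d k0); auto.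
    right. intros w Hw. specialize (Hk2 w Hw).
    replace (wnorm1 a b w + -1 * wnorm2 c d w) with (wnorm1 a b w - wnorm2 c d w) in Hk2 by ring.
    exact Hk2.
Qed.
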